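(* Let $A$ be an integral quantum B-algebra, let $X,F\in U(A)$ and let $F$ be a filter of $A$. Then: (1) $\mu_F(X)=\big(\mu_F(X)\cdot\mu_F(X)\big)\cap X$; (2) if $1\in \mu_F(X)\leadsto(\mu_F(X)\to X)$, then $\mu_F(X)\cdot\mu_F\big(\mu_F(X)\leadsto(\mu_F(X)\to X)\big)\cdot\mu_F(X)=\mu_F(X)$; (3) $\mu_F(X)$ is a filter of $A$ if and only if $1\in \mu_F(X)\cap\big(\mu_F(X)\leadsto(\mu_F(X)\to X)\big)$.
   Context: A quantum B-algebra is a poset $(A,\le)$ with binary operations $\to,\leadsto$ such that for all $x,y,z\in A$: $y\to z\le(x\to y)\to(x\to z)$; $y\leadsto z\le(x\leadsto y)\leadsto(x\leadsto z)$; $y\le z$ implies $x\to y\le x\to z$; and $x\le y\to z$ iff $y\le x\leadsto z$. It is integral if it has a greatest element $1$ with $1\to x=1\leadsto x=x$ for all $x$. $U(A)$ denotes the set of all upper subsets of $A$ (including $\emptyset$), a quantale under inclusion with multiplication $X\cdot Y=\{a\in A\mid\exists y\in Y:\ y\to a\in X\}$. Its residuals are: for $Y,Z\in U(A)$, $Y\to Z$ is the largest $W\in U(A)$ with $W\cdot Y\subseteq Z$, and for $X,Z\in U(A)$, $X\leadsto Z$ is the largest $W\in U(A)$ with $X\cdot W\subseteq Z$. A filter of $A$ is a nonempty $F\in U(A)$ with $F\cdot F\subseteq F$. For $F,X\in U(A)$, $\mu_F(X)=F\cap X$. *)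

(* Defs.v *)
Set Implicit Arguments.

Record QBA := {
  car :> Type;
  le : car -> car -> Prop;
  imp : car -> car -> car;
  simp : car -> car -> car;
  le_refl : forall x, le x x;
  le_antisym : forall x y, le x y -> le y x -> x = y;
  le_trans : forall x y z, le x y -> le y z -> le x z;
  qba_ax1 : forall x y z, le (imp y z) (imp (imp x y) (imp x z));
  qba_ax2 : forall x y z, le (simp y z) (simp (simp x y) (simp x z));
  qba_ax3 : forall x y z, le y z -> le (imp x y) (imp x z);
  qba_ax4 : forall x y z, le x (imp y z) <-> le y (simp x z)
}.
Arguments le {_}.
Arguments imp {_}.
Arguments simp {_}.

Definition integral_with {A : QBA} (one : A) : Prop :=
  (forall x : A, le x one) /\
  (forall x : A, imp one x = x /\ simp one x = x).

Definition subset_of (A : QBA) := A -> Prop.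

Definition sincl {A : QBA} (X Y : subset_of A) : Prop := forall a, X a -> Y a.
Definition seq_set {A : QBA} (X Y : subset_of A) : Prop := forall a, X a <-> Y a.
Definition sinter {A : QBA} (X Y : subset_of A) : subset_of A := fun a => X a /\ Y a.

(** Upper subsets (elements of U(A), the empty set included). *)
Definition upper {A : QBA} (X : subset_of A) : Prop :=
  forall x y, X x -> le x y -> X y.

Definition umul {A : QBA} (X Y : subset_of A) : subset_of A :=
  fun a => exists y, Y y /\ X (imp y a).

(** Residuals of U(A), defined literally as the largest upper set with the
    required property, i.e. the union of all such upper sets. *)
Definition uimp {A : QBA} (Y Z : subset_of A) : subset_of A :=
  fun a => exists W : subset_of A, upper W /\ sincl (umul W Y) Z /\ W a.
Definition usimp {A : QBA} (X Z : subset_of A) : subset_of A :=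
  fun a => exists W : subset_of A, upper W /\ sincl (umul X W) Z /\ W a.

Definition is_filter {A : QBA} (F : subset_of A) : Prop :=
  (exists a, F a) /\ upper F /\ sincl (umul F F) F.

Definition muF {A : QBA} (F X : subset_of A) : subset_of A := sinter F X.

(* Main.v *)
Require Import Defs.

Lemma imp_self (A : QBA) (one : A) (Hone : integral_with one) (a : A) :
  imp a a = one.
Proof.
  destruct Hone as [H1 H2]. apply le_antisym; [apply H1|].
  apply (proj2 (qba_ax4 A one a a)). rewrite (proj2 (H2 a)). apply le_refl.
Qed.

Theorem proposition3p2 (A : QBA) (one : A) (Hone : integral_with one)
  (X F : subset_of A) (HX : upper X) (HF : is_filter F) :
  let M := muF F X in
  seq_set M (sinter (umul M M) X)
  /\ (usimp M (uimp M X) one ->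
      seq_set (umul (umul M (muF F (usimp M (uimp M X)))) M) M)
  /\ (is_filter M <-> sinter M (usimp M (uimp M X)) one).
Proof.
  intro M.
  destruct HF as [[f Hf] [HFu HFm]].
  pose proof Hone as [Htop Hid].
  assert (F1 : F one) by (apply (HFu f); auto).
  assert (FM : forall z b, F z -> F (imp z b) -> F b)
    by (intros z b Hz Hzb; apply HFm; exists z; auto).
  assert (M1 : forall a, M a -> M one).
  { intros a [Ha1 Ha2]. split; [exact F1| apply (HX a); auto]. }
  assert (Mu : upper M).
  { intros x y [H1 H2] Hxy. split; [apply (HFu x)|apply (HX x)]; auto. }
  assert (Key : forall z b, usimp M (uimp M X) z -> M (imp z b) -> uimp M X b).
  { intros z b [W [HWu [HWs HWz]]] Hm. apply HWs. exists z. auto. }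
  assert (Key2 : forall y a, uimp M X (imp y a) -> M y -> X a).
  { intros y a [W [HWu [HWs HWz]]] Hy. apply HWs. exists y. auto. }
  split; [|split].
  - intro a; split.
    + intros Ha. split; [|exact (proj2 Ha)]. exists a. split; auto.
      rewrite (imp_self _ _ Hone). eapply M1; eauto.
    + intros [[y [Hy Hya]] Ha]. split; [|exact Ha].
      apply (FM y); [exact (proj1 Hy)|exact (proj1 Hya)].
  - intros HS a. split.
    + intros [y [Hy [z [[Fz Sz] Hzya]]]]. split.
      * apply (FM y); [exact (proj1 Hy)|]. apply (FM z); auto. exact (proj1 Hzya).
      * eapply Key2; [|exact Hy]. eapply Key; eauto.
    + intros Ha. exists a. split; auto. rewrite (imp_self _ _ Hone).
      exists one. split; [split; auto|]. rewrite (proj1 (Hid one)). eapply M1; eauto.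
  - split.
    + intros [[m Hm] [_ HMm]]. split; [eapply M1; eauto|].
      exists M. split; [exact Mu|]. split; [|eapply M1; eauto].
      intros b Hb. exists M. split; [exact Mu|]. split; [|apply HMm; exact Hb].
      intros c Hc. apply (HMm c Hc).
    + intros [HM1 HS]. split; [exists one; exact HM1|]. split; [exact Mu|].
      intros a [y [Hy Hya]]. split.
      * apply (FM y); [exact (proj1 Hy)|exact (proj1 Hya)].
      * eapply Key2; [|exact Hy]. eapply Key; [exact HS|].
        rewrite (proj1 (Hid _)). exact Hya.
Qed.
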